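(* Let $\Gamma$ be an elliptic graph with NN-elliptic sequence $\{B_j\}$ and cycles $C_j$, and let $\ell\in Supp_j(P_0)$ for some $-1\le j\le m-1$. Write $Z_K-E-\ell=C_j+\sum_{v\in\mathcal V(\Gamma)\setminus\mathcal V(B_{j+1})}m_vE_v$ with $m_v\in\mathbb Z_{\ge 0}$. If $m_v\ne0$, then $v$ is not adjacent to any vertex of $B_{j+1}$.
   Context: Let $\Gamma$ be a finite connected tree with vertex set $\mathcal V$, each vertex $v$ decorated by an integer $e_v$ (genera zero). $L=\mathbb Z\langle E_v\rangle$ with form $(E_v,E_v)=e_v$, $(E_v,E_w)=1$ for adjacent $v\ne w$, $0$ otherwise, assumed negative definite; $L'$ the dual lattice $\{l'\in L\otimes\mathbb Q:(l',L)\subset\mathbb Z\}$, $[l']$ the class in $L'/L$; $E_v^*$ with $(E_v^*,E_w)=-\delta_{vw}$; $\delta_v$ valency; $E=\sum E_v$; $\ge$ coordinatewise, $\prec$ strict in all coordinates, $l>0$ if $l\ge0,l\ne0$; $|l'|$ the support. $Z_K$ with $(Z_K,E_v)=e_v+2$; $\chi(l')=-(l',l'-Z_K)/2$. $\mathcal S'=\{l':(l',E_v)\le0\ \forall v\}$, $s_h=\min\{l'\in\mathcal S':[l']=h\}$; $Z_{min}(B)$ the minimal nonzero element of $\mathcal S'(B)\cap L(B)$ for a connected full subgraph $B$. $Z(\mathbf t)=\sum z(l')\mathbf t^{l'}$ the Taylor expansion at $0$ of $\prod_v(1-\mathbf t^{E_v^*})^{\delta_v-2}$; $P_0(\mathbf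 t)=\sum_{\ell\in L,\ell\not\prec0}w(\ell)\mathbf t^\ell$, $w(\ell)=z(Z_K-E-\ell)$, $Supp(P_0)=\{\ell\not\prec0:w(\ell)\ne0\}$. Elliptic graph: $e_v\le-2$ for all $v$, $\min_{l\in L,l>0}\chi(l)=0$. NN-elliptic sequence: $B_{-1}=\Gamma$, $Z_{B_{-1}}=s_{[Z_K]}$, $B_0=|Z_K-s_{[Z_K]}|$; for $j\ge0$, $Z_{B_j}=Z_{min}(B_j)$, and if $Z_K-\sum_{i=-1}^jZ_{B_i}\ne0$ then $B_{j+1}=|Z_K-\sum_{i=-1}^jZ_{B_i}|$; $m$ is the index with $Z_K=\sum_{i=-1}^mZ_{B_i}$; $C_j=\sum_{i=-1}^jZ_{B_i}$. For $\ell\in Supp(P_0)$ with $\mathcal V^{<0}(\ell)=\{v:\ell_v<0\}$, the associated cycle is the unique $l'$ with $\ell=Z_K-E-l'-\sum_{v\in\mathcal V^{<0}(\ell)}m_vE_v$, $l'\le Z_K$, $l'_v=(Z_K)_v$ on $\mathcal V^{<0}(\ell)$, $m_v\in\mathbb Z_{\ge0}$; $Supp_j(P_0)$ is the set of $\ell$ with associated cycle $C_j$ (for such $\ell$ it is known that $\mathcal V^{<0}(\ell)=\mathcal V\setminus\mathcal V(B_{j+1})$). *)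

(* Defs.v *)
(* Plumbing graphs: vertices 'I_n, rational row vectors 'rV[rat]_n
   represent elements of L (x) Q in the basis (E_v). *)
From mathcomp Require Import all_boot all_order all_algebra.
Set Implicit Arguments. Unset Strict Implicit. Unset Printing Implicit Defensive.
Import Order.TTheory GRing.Theory Num.Theory.
Local Open Scope ring_scope.

Section Plumbing.
Variable n : nat.
Variable adj : rel 'I_n.
Variable e : 'I_n -> int.

Definition vec := 'rV[rat]_n.

Definition Ev (v : 'I_n) : vec := delta_mx 0 v.
Definition EE : vec := \sum_v Ev v.

Definition is_tree : Prop :=
  [/\ (0 < n)%N, symmetric adj, irreflexive adj,
      (forall v w, connect adj v w) &
      #|[set p : 'I_n * 'I_n | adj p.1 p.2]| = (2 * n.-1)%N].

Definition valency (v : 'I_n) : nat := #|[set w | adj v w]|.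

Definition IM : 'M[rat]_n :=
  \matrix_(v, w) (if v == w then (e v)%:~R else if adj v w then 1 else 0).

Definition form (x y : vec) : rat := (x *m IM *m y^T) 0 0.

Definition inL (x : vec) : Prop := forall v, x 0 v \is a Num.int.
Definition inL' (x : vec) : Prop := forall v, form x (Ev v) \is a Num.int.

Definition leV (x y : vec) : Prop := forall v, x 0 v <= y 0 v.

Definition supp (x : vec) : {set 'I_n} := [set v | x 0 v != 0].

Definition neg_definite : Prop :=
  forall x : vec, inL x -> x != 0 -> form x x < 0.

(* E_v^* : (E_v^*, E_w) = - delta_vw *)
Definition Estar (v : 'I_n) : vec := - row v (invmx IM).

(* Z_K : (Z_K, E_v) = e_v + 2 *)
Definition ZK : vec := - \sum_v ((e v + 2)%:~R *: Estar v).

Definition chi (x : vec) : rat := - form x (x - ZK) / 2.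

Definition elliptic : Prop :=
  (forall v, e v <= -2) /\
  (exists l : vec, [/\ inL l, leV 0 l, l != 0 & chi l = 0]) /\
  (forall l : vec, inL l -> leV 0 l -> l != 0 -> 0 <= chi l).

Definition inS' (x : vec) : Prop := inL' x /\ forall v, form x (Ev v) <= 0.

(* x = s_{[Z_K]} : the minimum of {l' in S' : [l'] = [Z_K]} *)
Definition is_sZK (x : vec) : Prop :=
  [/\ inS' x, inL (x - ZK) &
      forall y, inS' y -> inL (y - ZK) -> leV x y].

(* elements of S'(B) \cap L(B), B the full subgraph on the vertex set B *)
Definition inSL (B : {set 'I_n}) (x : vec) : Prop :=
  [/\ forall v, v \notin B -> x 0 v = 0, inL x &
      forall v, v \in B -> form x (Ev v) <= 0].

Definition is_Zmin (B : {set 'I_n}) (x : vec) : Prop :=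
  [/\ inSL B x, x != 0 &
      forall y, inSL B y -> y != 0 -> leV x y].

(* NN-elliptic sequence, with shifted indices: Bs k = B_{k-1}, Zs k = Z_{B_{k-1}},
   M = m + 1.  C k = C_{k-1} = sum_{i <= k} Zs i. *)
Definition Csum (Zs : nat -> vec) (k : nat) : vec := \sum_(i < k.+1) Zs i.

Definition NN_elliptic_seq (M : nat) (Bs : nat -> {set 'I_n}) (Zs : nat -> vec) : Prop :=
  [/\ Bs 0%N = [set: 'I_n], is_sZK (Zs 0%N),
      (forall k, (1 <= k <= M)%N -> is_Zmin (Bs k) (Zs k)),
      (forall k, (k < M)%N -> ZK - Csum Zs k != 0 /\ Bs k.+1 = supp (ZK - Csum Zs k)) &
      ZK = Csum Zs M].

(* Taylor coefficients of (1 - x)^k, k integer *)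
Definition binom_coef (k : int) (m : nat) : rat :=
  match k with
  | Posz a => (-1) ^+ m * ('C(a, m))%:R
  | Negz a => ('C(m + a, m))%:R
  end.

(* bound on the exponents n_v appearing in the coefficient of t^l *)
Definition zbound (l : vec) : nat :=
  (\max_(v : 'I_n) Num.truncn (l ord0 v / Estar v ord0 v)%R).+1.

(* z(l') : coefficient of t^{l'} in the expansion of prod_v (1 - t^{E_v^*})^{delta_v - 2},
   i.e. sum over (n_v) with sum_v n_v E_v^* = l' of prod_v coef_{delta_v-2}(n_v).
   (The sum is restricted to n_v < zbound l', which loses nothing since all entries
   of E_v^* are >= 0 and its diagonal entries are > 0.) *)
Definition zcoef (l : vec) : rat :=
  \sum_(nn : {ffun 'I_n -> 'I_(zbound l)})
     (if \sum_v ((nn v : nat)%:R *: Estar v) == l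
      then \prod_v binom_coef ((valency v)%:Z - 2) (nn v) else 0).

Definition wP0 (l : vec) : rat := zcoef (ZK - EE - l).

Definition inSuppP0 (l : vec) : Prop :=
  [/\ inL l, exists v, 0 <= l 0 v & wP0 l != 0].

Definition assoc_cycle (l c : vec) : Prop :=
  [/\ exists mm : 'I_n -> nat,
        l = ZK - EE - c - \sum_(v | l 0 v < 0) ((mm v)%:R *: Ev v),
      leV c ZK &
      forall v, l 0 v < 0 -> c 0 v = ZK 0 v].

End Plumbing.

(* Main.v *)
Require Import Defs.
From mathcomp Require Import all_boot all_order all_algebra.
From mathcomp Require Import lra.
Import Order.TTheory GRing.Theory Num.Theory.
Local Open Scope ring_scope.
Set Implicit Arguments. Unset Strict Implicit. Unset Printing Implicit Defensive.

Section Aux.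
Variables (n : nat) (adj : rel 'I_n) (e : 'I_n -> int).

Lemma formE (x y : vec n) : Defs.form adj e x y = \sum_i (x *m IM adj e) 0 i * y 0 i.
Proof. rewrite /Defs.form [in LHS]mxE; apply: eq_bigr => i _; by rewrite [_^T _ _]mxE. Qed.

Lemma formEv (x : vec n) w : Defs.form adj e x (Ev w) = (x *m IM adj e) 0 w.
Proof.
rewrite formE (bigD1 w) //= big1 => [|i ne].
  by rewrite /Ev [delta_mx _ _ _ _]mxE !eqxx mulr1 addr0.
by rewrite /Ev [delta_mx _ _ _ _]mxE (negbTE ne) andbF mulr0.
Qed.

Lemma formNr (x y : vec n) : Defs.form adj e x (- y) = - Defs.form adj e x y.
Proof. rewrite !formE -sumrN; apply: eq_bigr => i _; by rewrite [(- y) 0 i]mxE mulrN. Qed.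

Lemma IMsym : symmetric adj -> (IM adj e)^T = IM adj e.
Proof.
move=> Hs; apply/matrixP => i j; rewrite !mxE eq_sym.
by case: eqP => [->|] //; rewrite Hs.
Qed.

Lemma formC : symmetric adj -> forall x y : vec n, Defs.form adj e x y = Defs.form adj e y x.
Proof.
move=> Hs x y; rewrite /Defs.form.
transitivity (((x *m IM adj e *m y^T)^T) 0 0); first by rewrite [in RHS]mxE.
by rewrite !trmx_mul trmxK IMsym // mulmxA.
Qed.

Lemma IM_offdiag u w : u != w -> 0 <= IM adj e u w.
Proof. by move=> /negbTE h; rewrite mxE h; case: (adj u w). Qed.

Lemma SL_ge0 (B : {set 'I_n}) (x : vec n) :
  neg_definite adj e -> inSL adj e B x -> forall v, 0 <= x 0 v.
Proof.
move=> Hneg [Hout HL Hin].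
pose y : vec n := \row_v (if x 0 v < 0 then - x 0 v else 0).
pose p : vec n := \row_v (if x 0 v < 0 then 0 else x 0 v).
have Hx : x = p - y.
  apply/rowP => v; rewrite !mxE; case: ifP => _; by rewrite ?subr0 ?sub0r ?opprK.
have y_ge0 : forall i, 0 <= y 0 i.
  move=> i; rewrite mxE; case: ifP => // h; by rewrite oppr_ge0 ltW.
have p_ge0 : forall i, 0 <= p 0 i.
  move=> i; rewrite mxE; case: ifP => // h; by rewrite leNgt h.
have py0 : forall i, p 0 i * y 0 i = 0.
  move=> i; rewrite !mxE; case: ifP => _; by rewrite ?mul0r ?mulr0.
suff y0 : y = 0.
  move=> v; have := p_ge0 v; by rewrite Hx y0 subr0.
apply/eqP; apply/negPn/negP => ynz.
have HyL : inL y.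
  move=> v; rewrite mxE; case: ifP => _; by rewrite ?rpredN ?rpred0.
have Hyy := Hneg y HyL ynz.
have Hxy : Defs.form adj e x y <= 0.
  rewrite formE; apply: sumr_le0 => i _.
  rewrite [y 0 i]mxE; case: ifP => xi; last by rewrite mulr0.
  apply: mulr_le0_ge0; last by rewrite oppr_ge0 ltW.
  have iB : i \in B.
    apply/negPn/negP => /Hout h; by rewrite h ltxx in xi.
  by rewrite -formEv Hin.
have Hpy : 0 <= Defs.form adj e p y.
  rewrite formE; apply: sumr_ge0 => i _; rewrite mxE mulr_suml.
  apply: sumr_ge0 => j _.
  case: (eqVneq j i) => [->|ne].
    by rewrite mulrAC py0 mul0r.
  by rewrite mulr_ge0 // mulr_ge0 // IM_offdiag.
have E : Defs.form adj e x y = Defs.form adj e p y - Defs.form adj e y y.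
  rewrite !formE -sumrB Hx; apply: eq_bigr => i _.
  by rewrite mulmxBl [(p *m _ - _) 0 i]mxE [(- (y *m _)) 0 i]mxE mulrBl.
have := lt_le_trans Hyy Hpy; rewrite -subr_gt0 -E => h.
by move: (lt_le_trans h Hxy); rewrite ltxx.
Qed.

Lemma IM_unit : neg_definite adj e -> IM adj e \in unitmx.
Proof.
move=> Hneg; rewrite unitmxE unitfE; apply/negP => /det0P [x xnz xIM].
pose c : rat := (\prod_v denq (x 0 v))%:~R.
have c0 : c != 0.
  rewrite intr_eq0; apply/prodf_neq0 => v _; exact: denq_neq0.
have HyL : inL (c *: x).
  move=> v; rewrite mxE /c (bigD1 v) //= rmorphM /=.
  have -> : (denq (x 0 v))%:~R * (\prod_(i | i != v) denq (x 0 i))%:~R * x 0 v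
      = (x 0 v * (denq (x 0 v))%:~R) * (\prod_(i | i != v) denq (x 0 i))%:~R.
    by rewrite mulrC mulrA.
  by rewrite -numqE rpredM // intr_int.
have nz : c *: x != 0 by rewrite scaler_eq0 negb_or c0 xnz.
have := Hneg _ HyL nz.
by rewrite formE -scalemxAl xIM scaler0 big1 ?ltxx // => i _; rewrite mxE mul0r.
Qed.

Lemma Estar_IM v : IM adj e \in unitmx -> Estar adj e v *m IM adj e = - Ev v.
Proof. by move=> Hu; rewrite /Estar mulNmx -row_mul mulVmx // row1. Qed.

Lemma zcoef_le0 (x : vec n) : IM adj e \in unitmx ->
  zcoef adj e x != 0 -> forall w, (x *m IM adj e) 0 w <= 0.
Proof.
move=> Hu H w; move: H; rewrite /zcoef.
case: (pickP (fun nn : {ffun 'I_n -> 'I_(zbound adj e x)} =>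
   \sum_v ((nn v : nat)%:R *: Estar adj e v) == x)) => [nn /eqP Hnn|Hno]; last first.
  by rewrite big1 ?eqxx // => nn _; rewrite Hno.
move=> _; rewrite -Hnn mulmx_suml summxE; apply: sumr_le0 => i _.
rewrite -scalemxAl Estar_IM // mxE mxE mulrN oppr_le0 mulr_ge0 //.
by rewrite /Ev mxE; case: (_ && _).
Qed.

End Aux.

(* k = j + 1, M = m + 1; Bs (k+1) = B_{j+1}, Csum Zs k = C_j *)
Theorem mainTheorem9 (n : nat) (adj : rel 'I_n) (e : 'I_n -> int)
  (Htree : is_tree adj) (Hneg : neg_definite adj e) (Hell : elliptic adj e)
  (M : nat) (Bs : nat -> {set 'I_n}) (Zs : nat -> vec n)
  (Hseq : NN_elliptic_seq adj e M Bs Zs)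
  (k : nat) (Hk : (k < M)%N)
  (l : vec n) (Hl : inSuppP0 adj e l)
  (Hc : assoc_cycle adj e l (Csum Zs k)) :
  forall mm : 'I_n -> nat,
    ZK adj e - EE n - l = Csum Zs k + \sum_(v | v \notin Bs k.+1) ((mm v)%:R *: Ev v) ->
    forall v, v \notin Bs k.+1 -> mm v != 0%N ->
    forall w, w \in Bs k.+1 -> ~~ adj v w.
Proof.
move=> mm Hmm v vB mv0 w wB; apply/negP => Hvw.
have [_ Hsym _ _ _] := Htree.
have Hu := IM_unit Hneg.
have [HB0 HZ0 HZ HBs HZK] := Hseq.
have Zge0 : forall t, (1 <= t <= M)%N -> forall u, 0 <= Zs t 0 u.
  by move=> t /HZ [H _ _]; apply: SL_ge0 H.
have Zint : forall t, (1 <= t <= M)%N -> inL (Zs t).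
  by move=> t /HZ [[_ H _] _ _].
have Tail : forall a, (a <= M)%N ->
    ZK adj e - Csum Zs a = \sum_(a.+1 <= t < M.+1) Zs t.
  move=> a aM; rewrite HZK /Csum -!(big_mkord xpredT).
  rewrite (@big_cat_nat _ _ _ a.+1 0 M.+1) ?ltnS //=.
  by rewrite addrC addrK.
have Tail_ge0 : forall a b u, (b <= M.+1)%N ->
    0 <= (\sum_(a.+1 <= t < b) Zs t) 0 u.
  move=> a b u bM; rewrite summxE big_nat_cond; apply: sumr_ge0 => t.
  move=> /andP [/andP [h1 h2] _]; apply: Zge0.
  by rewrite (leq_trans _ h1) //= -ltnS (leq_trans h2).
set C := Csum Zs k.
set D := ZK adj e - C.
have DE : D = \sum_(k.+1 <= t < M.+1) Zs t by rewrite /D Tail // ltnW.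
have Dge0 : forall u, 0 <= D 0 u by move=> u; rewrite DE Tail_ge0.
have DL : inL D.
  move=> u; rewrite DE summxE big_nat_cond; apply: rpred_sum => t.
  move=> /andP [/andP [h1 h2] _]; apply: Zint.
  by rewrite (leq_trans _ h1) //= -ltnS.
have [Dnz HBk] := HBs k Hk.
have D0 : leV 0 D by move=> u; rewrite mxE Dge0.
have Hchi := (Hell.2.2) D DL D0 Dnz.
have chiE : chi adj e D = Defs.form adj e D C / 2.
  rewrite /chi.
  have -> : D - ZK adj e = - C by rewrite /D addrAC subrr add0r.
  by rewrite formNr opprK.
have HDC : 0 <= Defs.form adj e D C by move: Hchi; rewrite chiE pmulr_lge0 // invr_gt0.
have inBk : forall u, (u \in Bs k.+1) = (D 0 u != 0) by move=> u; rewrite HBk inE.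
have CIM : forall u, u \in Bs k.+1 -> (C *m IM adj e) 0 u <= 0.
  move=> u uB; rewrite /C /Csum mulmx_suml summxE; apply: sumr_le0 => -[[|t] Ht] _ /=.
    by have [[_ H] _ _] := HZ0; rewrite -formEv H.
  have tM : (t.+1 <= M)%N by exact: leq_trans (ltnW Ht) Hk.
  have [[_ _ Hin] _ _] := HZ t.+1 tM.
  rewrite -formEv Hin //.
  have [_ ->] := HBs t (leq_trans (ltnSn t) tM).
  rewrite inE Tail ?(ltnW (leq_trans (ltnSn t) tM)) //.
  rewrite (@big_cat_nat _ _ _ k.+1 t.+1 M.+1) /=; last 2 first.
  - exact: ltnW.
  - by rewrite ltnS ltnW.
  rewrite -DE [(_ + D) 0 u]mxE; apply: lt0r_neq0.
  rewrite ltr_wpDl ?Tail_ge0 //; first by rewrite ltnS ltnW.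
  by rewrite lt0r Dge0 andbT -inBk.
have CIMw : (C *m IM adj e) 0 w = 0.
  move: HDC; rewrite formC // formE => HDC.
  pose F i := - ((C *m IM adj e) 0 i * D 0 i).
  have Fge0 : forall i, true -> 0 <= F i.
    move=> i _; rewrite /F oppr_ge0.
    case: (eqVneq (D 0 i) 0) => [->|dnz]; first by rewrite mulr0.
    by rewrite mulr_le0_ge0 // CIM // inBk.
  have F0 : \sum_i F i = 0.
    apply/eqP; rewrite eq_le sumr_ge0 // andbT.
    by rewrite /F sumrN oppr_le0.
  move: (psumr_eq0P Fge0 F0) => /(_ w isT).
  have Dw : D 0 w != 0 by rewrite -inBk.
  by rewrite /F => /eqP; rewrite oppr_eq0 mulf_eq0 (negbTE Dw) orbF => /eqP.
have [_ _ Hw] := Hl.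
have := zcoef_le0 Hu Hw w.
rewrite /wP0 Hmm mulmxDl mxE CIMw add0r mulmx_suml summxE.
apply/negP; rewrite -ltNge.
rewrite (bigD1 v) //= ltr_wpDr //.
  apply: sumr_ge0 => u /andP [uB _].
  rewrite -scalemxAl mxE /Ev -rowE mxE mulr_ge0 // IM_offdiag //.
  by apply: contraNneq uB => ->.
rewrite -scalemxAl mxE /Ev -rowE mxE.
have vw : v != w by apply: contraNneq vB => ->.
rewrite [IM _ _ _ _]mxE (negbTE vw) Hvw mulr1 ltr0n lt0n //.
Qed.
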